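(* Let $q_1,\dots,q_5\in\widehat{\mathbb H}$ be five distinct points and let $q'_1,\dots,q'_5\in\widehat{\mathbb H}$ be five distinct points. Then there exists a fractional linear transformation $T$ with $T(q_n)=q'_n$ for $n=1,\dots,5$ if and only if there exists $a\in\mathbb H^\times$ such that $$Q(q'_1,q'_2,q'_3,q'_4)=aQ(q_1,q_2,q_3,q_4)a^{-1}\quad\text{and}\quad Q(q'_1,q'_2,q'_3,q'_5)=aQ(q_1,q_2,q_3,q_5)a^{-1}.$$
   Context: $\mathbb H$ denotes the quaternions, $\mathbb H^\times=\mathbb H\setminus\{0\}$, $\widehat{\mathbb H}=\mathbb H\cup\{\infty\}$. A fractional linear transformation of $\widehat{\mathbb H}$ is a map $q\mapsto(aq+b)(cq+d)^{-1}$ with $\begin{pmatrix}a&b\\c&d\end{pmatrix}\in GL(2,\mathbb H)$. For four distinct points the cross-ratio is $Q(q_1,q_2,q_3,q_4)=(q_2-q_1)^{-1}(q_4-q_1)(q_4-q_3)^{-1}(q_2-q_3)$, defined by taking limits if some $q_n=\infty$. *)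

(* Defs.v *)
From HB Require Import structures.
From mathcomp Require Import all_boot all_order all_algebra.
From mathcomp Require Import reals.
Set Implicit Arguments. Unset Strict Implicit. Unset Printing Implicit Defensive.
Import Order.TTheory GRing.Theory Num.Theory.
Local Open Scope ring_scope.

Section Quat.
Variable R : realType.

Record quat := Quat { qr : R; qi : R; qj : R; qk : R }.

Definition q0 : quat := Quat 0 0 0 0.
Definition q1 : quat := Quat 1 0 0 0.
Definition qadd (x y : quat) : quat :=
  Quat (qr x + qr y) (qi x + qi y) (qj x + qj y) (qk x + qk y).
Definition qopp (x : quat) : quat := Quat (- qr x) (- qi x) (- qj x) (- qk x).
Definition qsub (x y : quat) : quat := qadd x (qopp y).
Definition qmul (x y : quat) : quat :=
  Quat (qr x * qr y - qi x * qi y - qj x * qj y - qk x * qk y)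
       (qr x * qi y + qi x * qr y + qj x * qk y - qk x * qj y)
       (qr x * qj y - qi x * qk y + qj x * qr y + qk x * qi y)
       (qr x * qk y + qi x * qj y - qj x * qi y + qk x * qr y).
Definition qnorm2 (x : quat) : R := qr x ^+ 2 + qi x ^+ 2 + qj x ^+ 2 + qk x ^+ 2.
(* multiplicative inverse, with the harmless convention 0^-1 = 0 *)
Definition qinv (x : quat) : quat :=
  let n := qnorm2 x in
  Quat (qr x / n) (- qi x / n) (- qj x / n) (- qk x / n).
Definition qeq0 (x : quat) : bool :=
  [&& qr x == 0, qi x == 0, qj x == 0 & qk x == 0].

(* extended quaternions: None is the point at infinity *)
Definition hext := option quat.

(* invertibility of [[a,b],[c,d]] in GL(2,H): two-sided inverse matrix *)
Definition GL2 (a b c d : quat) : Prop :=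
  exists a' b' c' d' : quat,
    [/\ qadd (qmul a a') (qmul b c') = q1, qadd (qmul a b') (qmul b d') = q0,
        qadd (qmul c a') (qmul d c') = q0 & qadd (qmul c b') (qmul d d') = q1 ] /\
    [/\ qadd (qmul a' a) (qmul b' c) = q1, qadd (qmul a' b) (qmul b' d) = q0,
        qadd (qmul c' a) (qmul d' c) = q0 & qadd (qmul c' b) (qmul d' d) = q1 ].

(* q |-> (a q + b)(c q + d)^-1 on H ∪ {oo}, extended by continuity *)
Definition flt (a b c d : quat) (x : hext) : hext :=
  match x with
  | Some q => let den := qadd (qmul c q) d in
              if qeq0 den then None else Some (qmul (qadd (qmul a q) b) (qinv den))
  | None => if qeq0 c then None else Some (qmul a (qinv c))
  end.

Definition crfin (x1 x2 x3 x4 : quat) : quat :=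
  qmul (qmul (qmul (qinv (qsub x2 x1)) (qsub x4 x1)) (qinv (qsub x4 x3))) (qsub x2 x3).

(* cross-ratio on H ∪ {oo}; values at oo are limits.
   The value on non-distinct arguments with two oo's is irrelevant (0). *)
Definition cr (x1 x2 x3 x4 : hext) : quat :=
  match x1, x2, x3, x4 with
  | Some a, Some b, Some c, Some d => crfin a b c d
  | None, Some b, Some c, Some d => qmul (qinv (qsub d c)) (qsub b c)
  | Some a, None, Some c, Some d => qmul (qsub d a) (qinv (qsub d c))
  | Some a, Some b, None, Some d => qmul (qinv (qsub b a)) (qsub d a)
  | Some a, Some b, Some c, None => qmul (qinv (qsub b a)) (qsub b c)
  | _, _, _, _ => q0
  end.

End Quat.

Definition i5_0 : 'I_5 := @Ordinal 5 0 isT.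
Definition i5_1 : 'I_5 := @Ordinal 5 1 isT.
Definition i5_2 : 'I_5 := @Ordinal 5 2 isT.
Definition i5_3 : 'I_5 := @Ordinal 5 3 isT.
Definition i5_4 : 'I_5 := @Ordinal 5 4 isT.

(* Main.v *)
Require Import Defs.
From mathcomp Require Import all_boot all_order all_algebra.
From mathcomp Require Import reals.
From HB Require Import structures.
From mathcomp Require Import ring lra.
Set Implicit Arguments. Unset Strict Implicit. Unset Printing Implicit Defensive.
Import Order.TTheory GRing.Theory Num.Theory.
Local Open Scope ring_scope.
Set Bullet Behavior "Strict Subproofs".


Section QS.
Variable R : realType.
Local Notation H := (quat R).

Definition q2t (x : H) := (qr x, qi x, qj x, qk x).
Definition t2q (t : R * R * R * R) : H := Quat t.1.1.1 t.1.1.2 t.1.2 t.2.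
Lemma q2tK : cancel q2t t2q. Proof. by case. Qed.
HB.instance Definition _ := Choice.copy H (can_type q2tK).

Lemma quatP (x y : H) : qr x = qr y -> qi x = qi y -> qj x = qj y -> qk x = qk y -> x = y.
Proof. by case: x => ????; case: y => ???? /= -> -> -> ->. Qed.

Ltac qext1 := rewrite ?/associative ?/commutative ?/left_id ?/right_id ?/left_inverse ?/left_distributive ?/right_distributive; intros; repeat match goal with x : H |- _ => destruct x end;
  apply: quatP; rewrite /=.

Lemma qaddA : associative (@qadd R). Proof. qext1; ring. Qed.
Lemma qaddC : commutative (@qadd R). Proof. qext1; ring. Qed.
Lemma qadd0 : left_id (q0 R) (@qadd R). Proof. qext1; ring. Qed.
Lemma qaddN : left_inverse (q0 R) (@qopp R) (@qadd R). Proof. qext1; ring. Qed.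
HB.instance Definition _ := GRing.isZmodule.Build H qaddA qaddC qadd0 qaddN.

Lemma qmulA : associative (@qmul R). Proof. qext1; ring. Qed.
Lemma qmul1 : left_id (q1 R) (@qmul R). Proof. qext1; ring. Qed.
Lemma qmulr1 : right_id (q1 R) (@qmul R). Proof. qext1; ring. Qed.
Lemma qmulDl : left_distributive (@qmul R) (@qadd R). Proof. qext1; ring. Qed.
Lemma qmulDr : right_distributive (@qmul R) (@qadd R). Proof. qext1; ring. Qed.
Lemma q1n0 : q1 R != q0 R.
Proof. by apply/eqP => -[] /eqP; rewrite oner_eq0. Qed.
HB.instance Definition _ := GRing.Zmodule_isNzRing.Build H qmulA qmul1 qmulr1 qmulDl qmulDr q1n0.

Lemma qnorm2_eq0 (x : H) : (qnorm2 x == 0) = (x == q0 R).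
Proof.
case: x => a b c d; rewrite /qnorm2 /=.
apply/idP/idP; last by move/eqP => [-> -> -> ->]; rewrite expr0n /= !addr0.
move=> /eqP h.
have ha : a ^+ 2 = 0 by apply/eqP; rewrite eq_le sqr_ge0 andbT; nra.
have hb : b ^+ 2 = 0 by apply/eqP; rewrite eq_le sqr_ge0 andbT; nra.
have hc : c ^+ 2 = 0 by apply/eqP; rewrite eq_le sqr_ge0 andbT; nra.
have hd : d ^+ 2 = 0 by apply/eqP; rewrite eq_le sqr_ge0 andbT; nra.
move: ha hb hc hd => /eqP; rewrite sqrf_eq0 => /eqP -> /eqP; rewrite sqrf_eq0 => /eqP ->
  /eqP; rewrite sqrf_eq0 => /eqP -> /eqP; rewrite sqrf_eq0 => /eqP ->. by [].
Qed.

Definition qunit := [pred x : H | x != q0 R].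

Lemma qmulV : {in qunit, left_inverse 1 (@qinv R) *%R}.
Proof.
move=> x; rewrite inE -qnorm2_eq0 => hn; apply: quatP; rewrite /= /qinv /=;
case: x hn => a b c d; rewrite /qnorm2 /= => hn; field; by [].
Qed.
Lemma qmulVr : {in qunit, right_inverse 1 (@qinv R) *%R}.
Proof.
move=> x; rewrite inE -qnorm2_eq0 => hn; apply: quatP; rewrite /= /qinv /=;
case: x hn => a b c d; rewrite /qnorm2 /= => hn; field; by [].
Qed.
Lemma qunitP (x y : H) : y * x = 1 /\ x * y = 1 -> qunit x.
Proof.
move=> [h _]; rewrite inE; apply/eqP => hx; move: h; rewrite hx.
have -> : y * q0 R = 0 by apply: mulr0.
by move/eqP; rewrite eq_sym oner_eq0.
Qed.
Lemma qinv_out : {in [predC qunit], (@qinv R) =1 id}.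
Proof.
move=> x; rewrite !inE negbK => /eqP ->; apply: quatP; rewrite /= /qnorm2 /=;
by rewrite !expr0n /= !addr0 ?mulr0 ?invr0 ?oppr0 ?mul0r ?mulr0.
Qed.
HB.instance Definition _ := GRing.NzRing_hasMulInverse.Build H qmulV qmulVr qunitP qinv_out.

Lemma qmulE (x y : H) : qmul x y = x * y. Proof. by []. Qed.
Lemma qaddE (x y : H) : qadd x y = x + y. Proof. by []. Qed.
Lemma qoppE (x : H) : qopp x = - x. Proof. by []. Qed.
Lemma qsubE (x y : H) : qsub x y = x - y. Proof. by []. Qed.
Lemma qinvE (x : H) : qinv x = x^-1. Proof. by []. Qed.
Lemma q0E : q0 R = 0. Proof. by []. Qed.
Lemma q1E : q1 R = 1. Proof. by []. Qed.
Lemma qeq0E (x : H) : qeq0 x = (x == 0).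
Proof.
case: x => a b c d; rewrite /qeq0 /=; apply/idP/eqP; last by move=> [-> -> -> ->]; rewrite !eqxx.
by move=> /and4P [/eqP -> /eqP -> /eqP -> /eqP ->].
Qed.
Lemma qunitE (x : H) : (x \is a GRing.unit) = (x != 0). Proof. by []. Qed.

End QS.


Section M.
Variable R : realType.
Local Notation H := (quat R).

Lemma qmul_eq0 (x y : H) : (x * y == 0) = (x == 0) || (y == 0).
Proof.
have [->|hx] := eqVneq x 0; first by rewrite mul0r eqxx.
have [->|hy] := eqVneq y 0; first by rewrite mulr0 eqxx.
apply/negbTE; apply/negP => /eqP h.
have : x^-1 * (x * y) = y by rewrite mulKr // qunitE.
by rewrite h mulr0 => /esym/eqP; rewrite (negbTE hy).
Qed.

Lemma qinvM (x y : H) : x != 0 -> y != 0 -> (x * y)^-1 = y^-1 * x^-1.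
Proof. by move=> hx hy; rewrite invrM // qunitE. Qed.

Record m2 := M2 { ma : H; mb : H; mc : H; md : H }.
Definition fltm (M : m2) := flt (ma M) (mb M) (mc M) (md M).
Definition GL2m M := GL2 (ma M) (mb M) (mc M) (md M).
Definition mmul M N := M2 (ma M * ma N + mb M * mc N) (ma M * mb N + mb M * md N)
   (mc M * ma N + md M * mc N) (mc M * mb N + md M * md N).
Definition mI := M2 1 0 0 1.

Lemma m2P (M N : m2) : ma M = ma N -> mb M = mb N -> mc M = mc N -> md M = md N -> M = N.
Proof. by case: M => ????; case: N => ???? /= -> -> -> ->. Qed.

Lemma GL2mP M : GL2m M <-> exists N, mmul M N = mI /\ mmul N M = mI.
Proof.
split.
  move=> [a' [b' [c' [d' [[h1 h2 h3 h4] [h5 h6 h7 h8]]]]]].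
  by exists (M2 a' b' c' d'); split; apply: m2P.
move=> [[a' b' c' d'] [h1 h2]]; exists a', b', c', d'.
split; split; [exact: (congr1 ma h1)|exact: (congr1 mb h1)|exact: (congr1 mc h1)|exact: (congr1 md h1)
  |exact: (congr1 ma h2)|exact: (congr1 mb h2)|exact: (congr1 mc h2)|exact: (congr1 md h2)].
Qed.

Ltac qext2 := intros; repeat match goal with x : H |- _ => destruct x | x : m2 |- _ => destruct x end;
  apply: quatP; rewrite /=.

Lemma mmulA : associative mmul.
Proof.
move=> [a b c d] [e f g h] [i j k l]; apply: m2P; rewrite /=; qext2; ring.
Qed.
Lemma mmul1m M : mmul mI M = M.
Proof. case: M => a b c d; apply: m2P; rewrite /= ?mul1r ?mul0r ?addr0 ?add0r //. Qed.
Lemma mmulm1 M : mmul M mI = M.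
Proof. case: M => a b c d; apply: m2P; rewrite /= ?mulr1 ?mulr0 ?addr0 ?add0r //. Qed.

Lemma GL2mM M N : GL2m M -> GL2m N -> GL2m (mmul M N).
Proof.
move=> /GL2mP [M' [h1 h2]] /GL2mP [N' [h3 h4]]; apply/GL2mP; exists (mmul N' M'); split.
  by rewrite mmulA -(mmulA M) h3 mmulm1 h1.
by rewrite mmulA -(mmulA N') h2 mmulm1 h4.
Qed.

Definition vec (x : hext R) : H * H := if x is Some q then (q, 1) else (1, 0).
Definition proj (w : H * H) : hext R := if w.2 == 0 then None else Some (w.1 * w.2^-1).
Definition mapv M (w : H * H) := (ma M * w.1 + mb M * w.2, mc M * w.1 + md M * w.2).

Lemma flt_proj M x : fltm M x = proj (mapv M (vec x)).
Proof.
case: M => a b c d; case: x => [x|]; rewrite /fltm /proj /= ?qeq0E ?qmulE ?qaddE ?qinvE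
  ?mulr1 ?mulr0 ?addr0 //.
Qed.

Lemma mapvA M N w : mapv M (mapv N w) = mapv (mmul M N) w.
Proof. case: w => u v; congr pair; rewrite /= !mulrDr !mulrDl !mulrA; by rewrite addrACA. Qed.

Lemma mapv1 w : mapv mI w = w.
Proof. by case: w => u v; rewrite /mapv /= !mul1r !mul0r addr0 add0r. Qed.

Definition sv (w : H * H) l := (w.1 * l, w.2 * l).

Lemma proj_sv w l : l != 0 -> proj (sv w l) = proj w.
Proof.
move=> hl; rewrite /proj /= qmul_eq0 (negbTE hl) orbF.
case: ifP => // h2; congr Some; rewrite qinvM ?h2 // mulrA mulrK //.
Qed.

Lemma mapv_sv M w l : mapv M (sv w l) = sv (mapv M w) l.
Proof. by rewrite /mapv /sv /= !mulrA -!mulrDl. Qed.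

Lemma vec_proj w : w != (0, 0) -> exists2 l, l != 0 & vec (proj w) = sv w l.
Proof.
case: w => u v /= hw; rewrite /proj /=; case: ifP => hv.
  move/eqP: hv => hv; subst v; have hu : u != 0 by apply: contra hw => /eqP ->.
  exists u^-1; first by rewrite invr_eq0.
  by rewrite /sv /= mulrV ?mul0r.
exists v^-1; first by rewrite invr_eq0 hv.
by rewrite /sv /= mulrV // qunitE hv.
Qed.

Lemma vec_neq0 x : vec x != (0, 0).
Proof. by case: x => [x|] /=; rewrite xpair_eqE oner_eq0 ?andbF. Qed.

Lemma mapv_neq0 N w : GL2m N -> w != (0, 0) -> mapv N w != (0, 0).
Proof.
move=> /GL2mP [N' [_ h]] hw; apply: contra hw => /eqP e.
by rewrite -(mapv1 w) -h -mapvA e /mapv /= !mulr0 addr0.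
Qed.

Lemma fltm_comp M N x : GL2m N -> fltm M (fltm N x) = fltm (mmul M N) x.
Proof.
move=> hN; rewrite !flt_proj.
have [l hl ->] := vec_proj (mapv_neq0 hN (vec_neq0 x)).
by rewrite mapv_sv proj_sv // mapvA.
Qed.

Lemma fltm1 x : fltm mI x = x.
Proof. by rewrite flt_proj mapv1; case: x => [x|]; rewrite /proj /= ?oner_eq0 ?divr1 ?eqxx. Qed.

Lemma fltm_inj M x y : GL2m M -> fltm M x = fltm M y -> x = y.
Proof.
move=> hM; have [N [h1 h2]] := (GL2mP M).1 hM => e.
have hN : GL2m N by apply/GL2mP; exists M.
by rewrite -(fltm1 x) -(fltm1 y) -h2 -!fltm_comp // e.
Qed.

End M.


Section A.
Variable R : realType.
Local Notation H := (quat R).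

Ltac qext3 := intros; repeat match goal with x : H |- _ => destruct x | x : m2 R |- _ => destruct x end;
  apply: quatP; rewrite /=.

Lemma crE4 (a b c d : H) : cr (Some a) (Some b) (Some c) (Some d) = (b - a)^-1 * (d - a) * (d - c)^-1 * (b - c).
Proof. by []. Qed.
Lemma crE3 (a b c : H) : cr (Some a) (Some b) (Some c) None = (b - a)^-1 * (b - c).
Proof. by []. Qed.

Definition Rf (M : m2 R) x := mc M * x + md M.
Definition Lf (M : m2 R) X := ma M - X * mc M.

Lemma flt_some M x X : fltm M (Some x) = Some X -> Rf M x != 0 /\ X * Rf M x = ma M * x + mb M.
Proof.
rewrite /fltm /= qeq0E; case: ifP => // h [<-].
change ((mc M * x + md M == 0) = false) in h.
split=> //.
by rewrite !qmulE !qaddE qinvE mulrVK // qunitE /Rf h.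
Qed.

Lemma flt_none M x : fltm M (Some x) = None -> Rf M x = 0.
Proof. rewrite /fltm /= qeq0E; case: ifP => // /eqP h _; exact: h. Qed.

Lemma Lf_diff M x y Y : Y * Rf M y = ma M * y + mb M ->
  Lf M Y * (x - y) = ma M * x + mb M - Y * Rf M x.
Proof.
move: M => [a b c d]; rewrite /Lf /Rf /= => hY.
have -> : b = Y * (c * y + d) - a * y by rewrite hY addrC addKr.
qext3; ring.
Qed.

Lemma X_diff M x y X Y : X * Rf M x = ma M * x + mb M -> Y * Rf M y = ma M * y + mb M ->
  Rf M x != 0 -> X - Y = Lf M Y * (x - y) * (Rf M x)^-1.
Proof.
move=> hX hY hx; rewrite (Lf_diff x hY) -hX -mulrBl mulrK // qunitE.
Qed.

Lemma cr_alg (L1 L3 R2 R4 D21 D41 D43 D23 : H) :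
  L1 != 0 -> L3 != 0 -> R2 != 0 -> R4 != 0 -> D21 != 0 -> D43 != 0 ->
  (L1 * D21 * R2^-1)^-1 * (L1 * D41 * R4^-1) * (L3 * D43 * R4^-1)^-1 * (L3 * D23 * R2^-1)
  = R2 * (D21^-1 * D41 * D43^-1 * D23) * R2^-1.
Proof.
move=> h1 h3 h2 h4 h21 h43.
have nz (u v : H) : u != 0 -> v != 0 -> u * v != 0 by move=> hu hv; rewrite qmul_eq0 negb_or hu hv.
rewrite !qinvM ?invr_eq0 ?nz // !invrK !mulrA.
rewrite (mulrVK (x:=L1)) ?qunitE // (mulrVK (x:=R4)) ?qunitE // (mulrVK (x:=L3)) ?qunitE //.
Qed.

Lemma cr_alg_inf (L1 L3 R2 D21 D41 D43 D23 : H) :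
  L1 != 0 -> R2 != 0 -> D21 != 0 -> D43 != 0 -> L3 * D43 = L1 * D41 ->
  (L1 * D21 * R2^-1)^-1 * (L3 * D23 * R2^-1)
  = R2 * (D21^-1 * D41 * D43^-1 * D23) * R2^-1.
Proof.
move=> h1 h2 h21 h43 e.
have nz (u v : H) : u != 0 -> v != 0 -> u * v != 0 by move=> hu hv; rewrite qmul_eq0 negb_or hu hv.
have -> : L3 = L1 * D41 * D43^-1 by rewrite -e mulrK // qunitE.
rewrite !qinvM ?invr_eq0 ?nz // !invrK !mulrA (mulrVK (x:=L1)) ?qunitE //.
Qed.

Lemma crA M (x1 x2 x3 x4 X1 X2 X3 : H) (z4 : hext R) :
  fltm M (Some x1) = Some X1 -> fltm M (Some x2) = Some X2 -> fltm M (Some x3) = Some X3 ->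
  fltm M (Some x4) = z4 ->
  x2 != x1 -> x4 != x3 -> X2 != X1 -> X2 != X3 ->
  cr (Some X1) (Some X2) (Some X3) z4 = Rf M x2 * cr (Some x1) (Some x2) (Some x3) (Some x4) * (Rf M x2)^-1.
Proof.
move=> /flt_some [r1 e1] /flt_some [r2 e2] /flt_some [r3 e3] e4 h21 h43 H21 H23.
have d21 := X_diff e2 e1 r2. have d23 := X_diff e2 e3 r2.
have nzL (L D : H) : L * D * (Rf M x2)^-1 != 0 -> L != 0.
  by apply: contra => /eqP ->; rewrite !mul0r.
have L1n : Lf M X1 != 0 by apply: nzL (x2 - x1) _; rewrite -d21 subr_eq0.
have L3n : Lf M X3 != 0 by apply: nzL (x2 - x3) _; rewrite -d23 subr_eq0.
rewrite crE4; case: z4 e4 => [X4|] e4.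
  have [r4 e4'] := flt_some e4.
  rewrite crE4 d21 d23 (X_diff e4' e1 r4) (X_diff e4' e3 r4).
  by rewrite cr_alg // subr_eq0.
have r4 := flt_none e4.
rewrite crE3 d21 d23 (cr_alg_inf (D41:=x4-x1) (D43:=x4-x3)) //; try by rewrite subr_eq0.
by rewrite (Lf_diff x4 e3) (Lf_diff x4 e1) r4 !mulr0 !subr0.
Qed.

End A.


Section B.
Variable R : realType.
Local Notation H := (quat R).

Definition Pm (p : H) := M2 0 1 1 (- p).
Definition Pinv (p : H) := M2 p 1 1 0.
Definition yv (p : H) (x : hext R) : H := if x is Some q then (q - p)^-1 else 0.
Definition psi (p : H) (x : hext R) : H := if x is Some q then q - p else 1.

Ltac qext4 := intros; repeat match goal with x : H |- _ => destruct x | x : m2 R |- _ => destruct x end;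
  apply: quatP; rewrite /=.

Lemma PmPinv p : mmul (Pm p) (Pinv p) = mI R.
Proof. apply: m2P; qext4; ring. Qed.
Lemma PinvPm p : mmul (Pinv p) (Pm p) = mI R.
Proof. apply: m2P; qext4; ring. Qed.
Lemma GL2Pm p : GL2m (Pm p).
Proof. by apply/GL2mP; exists (Pinv p); rewrite PmPinv PinvPm. Qed.
Lemma GL2Pinv p : GL2m (Pinv p).
Proof. by apply/GL2mP; exists (Pm p); rewrite PmPinv PinvPm. Qed.

Lemma fltP p x : x != Some p -> fltm (Pm p) x = Some (yv p x).
Proof.
case: x => [x|] hx; rewrite /fltm /= qeq0E.
  have hx' : x - p != 0 by rewrite subr_eq0; apply: contra hx => /eqP ->.
  rewrite !qmulE !qaddE mul1r mul0r add0r (negbTE hx') /=.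
  by rewrite qinvE mul1r.
by rewrite oner_eq0 qmulE qinvE mul0r.
Qed.

Lemma yv_inj p x y : x != Some p -> y != Some p -> yv p x = yv p y -> x = y.
Proof.
case: x => [x|]; case: y => [y|] //= hx hy.
- by move/invr_inj/eqP; rewrite subr_eq subrK => /eqP ->.
- move/eqP; rewrite invr_eq0 subr_eq0 => /eqP e; by move: hx; rewrite e eqxx.
- move/esym/eqP; rewrite invr_eq0 subr_eq0 => /eqP e; by move: hy; rewrite e eqxx.
Qed.

Lemma psi_neq0 p x : x != Some p -> psi p x != 0.
Proof. case: x => [x|] /= hx; last exact: oner_neq0. by rewrite subr_eq0; apply: contra hx => /eqP ->. Qed.

Lemma invB (a b : H) : a != 0 -> b != 0 -> a^-1 - b^-1 = b^-1 * (b - a) * a^-1.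
Proof.
move=> ha hb; rewrite mulrBr mulVr ?qunitE // mulrBl mul1r mulrK // qunitE.
Qed.

Lemma ydiff (p xi xj : H) : xi - p != 0 -> xj - p != 0 ->
  (xi - p)^-1 - (xj - p)^-1 = (- (xj - p)^-1) * (xi - xj) * (xi - p)^-1.
Proof.
move=> hi hj; rewrite invB // mulNr -mulrN opprB.
by congr (_ * _ * _); qext4; ring.
Qed.

Lemma crN1 (b c d : H) : cr None (Some b) (Some c) (Some d) = (d - c)^-1 * (b - c). Proof. by []. Qed.
Lemma crN2 (a c d : H) : cr (Some a) None (Some c) (Some d) = (d - a) * (d - c)^-1. Proof. by []. Qed.
Lemma crN3 (a b d : H) : cr (Some a) (Some b) None (Some d) = (b - a)^-1 * (d - a). Proof. by []. Qed.

Lemma yvS p (x : H) : yv p (Some x) = (x - p)^-1. Proof. by []. Qed.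
Lemma yvN p : yv p None = 0. Proof. by []. Qed.
Lemma psiS p (x : H) : psi p (Some x) = x - p. Proof. by []. Qed.
Lemma psiN p : psi p None = 1. Proof. by []. Qed.

Lemma neqS (x y : H) : Some x != Some y -> x != y.
Proof. by apply: contra => /eqP ->. Qed.

Lemma upL (p x : H) : Some x != Some p -> x - p != 0.
Proof. by move=> hx; rewrite subr_eq0; apply: contra hx => /eqP ->. Qed.
Ltac nzt := rewrite ?oppr_eq0 ?invr_eq0; first [exact: oner_neq0 | apply: upL; assumption |
  rewrite subr_eq0; apply: neqS; first [assumption | rewrite eq_sym; assumption]].

Lemma crB p x1 x2 x3 x4 : x1 != Some p -> x2 != Some p -> x3 != Some p -> x4 != Some p ->
  x1 != x2 -> x1 != x3 -> x1 != x4 -> x2 != x3 -> x2 != x4 -> x3 != x4 ->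
  cr (Some (yv p x1)) (Some (yv p x2)) (Some (yv p x3)) (Some (yv p x4))
  = psi p x2 * cr x1 x2 x3 x4 * (psi p x2)^-1.
Proof.
move=> p1 p2 p3 p4 h12 h13 h14 h23 h24 h34.
have up (x : H) : Some x != Some p -> x - p != 0.
  by move=> hx; rewrite subr_eq0; apply: contra hx => /eqP ->.
case: x1 p1 h12 h13 h14 => [x1|] p1 h12 h13 h14;
case: x2 p2 h12 h23 h24 => [x2|] p2 h12 h23 h24;
case: x3 p3 h13 h23 h34 => [x3|] p3 h13 h23 h34;
case: x4 p4 h14 h24 h34 => [x4|] p4 h14 h24 h34 => //.
-
  have := @crA R (Pm p) x1 x2 x3 x4 (yv p (Some x1)) (yv p (Some x2)) (yv p (Some x3))
    (Some (yv p (Some x4))) (fltP p1) (fltP p2) (fltP p3) (fltP p4).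
  rewrite /Rf /= mul1r => -> //; try by rewrite eq_sym neqS.
  + by apply/negP => /eqP /(yv_inj p2 p1) /eqP; rewrite eq_sym (negbTE h12).
  + by apply/negP => /eqP /(yv_inj p2 p3) /eqP; rewrite (negbTE h23).
-
  rewrite !yvS yvN psiS crE4 crE3 (ydiff (up _ p2) (up _ p1)) (ydiff (up _ p2) (up _ p3)) !sub0r.
  have E := @cr_alg R (- (x1 - p)^-1) (- (x3 - p)^-1) (x2 - p) 1 (x2 - x1) 1 1 (x2 - x3).
  rewrite invr1 !mulr1 in E; rewrite E //; nzt.
-
  rewrite !yvS yvN psiS crE4 crN3 (ydiff (up _ p2) (up _ p1)) (ydiff (up _ p4) (up _ p1)) !subr0.
  have E := @cr_alg R (- (x1 - p)^-1) 1 (x2 - p) (x4 - p) (x2 - x1) (x4 - x1) 1 1.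
  rewrite invr1 !mulr1 !mul1r in E; rewrite E //; nzt.
-
  rewrite !yvS yvN psiN crE4 crN2 (ydiff (up _ p4) (up _ p1)) (ydiff (up _ p4) (up _ p3)) !sub0r.
  rewrite invr1 mulr1 mul1r.
  have E := @cr_alg R (- (x1 - p)^-1) (- (x3 - p)^-1) 1 (x4 - p) 1 (x4 - x1) (x4 - x3) 1.
  rewrite invr1 !mulr1 !mul1r in E; rewrite E //; nzt.
-
  rewrite !yvS yvN psiS crE4 crN1 (ydiff (up _ p4) (up _ p3)) (ydiff (up _ p2) (up _ p3)) !subr0.
  have E := @cr_alg R 1 (- (x3 - p)^-1) (x2 - p) (x4 - p) 1 1 (x4 - x3) (x2 - x3).
  rewrite invr1 !mulr1 !mul1r in E; rewrite E //; nzt.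
Qed.


End B.


Section C.
Variable R : realType.
Local Notation H := (quat R).

Ltac qext5 := intros; repeat match goal with x : H |- _ => destruct x | x : m2 R |- _ => destruct x end;
  apply: quatP; rewrite /=.

Lemma nzM (u v : H) : u != 0 -> v != 0 -> u * v != 0.
Proof. by move=> hu hv; rewrite qmul_eq0 negb_or hu hv. Qed.

Lemma flt_someI (M : m2 R) (x X : H) : Rf M x != 0 -> X * Rf M x = ma M * x + mb M -> fltm M (Some x) = Some X.
Proof.
move=> h e; rewrite /fltm /= qeq0E.
have -> : (qadd (qmul (mc M) x) (md M) == 0) = false by apply: negbTE.
by congr Some; rewrite !qmulE !qaddE qinvE -e mulrK // qunitE.
Qed.

Definition Trm (t : H) := M2 1 t 0 1.
Definition Invm : m2 R := M2 0 1 1 0.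
Definition Affm (b G Hh : H) := M2 b G 0 Hh.

Lemma GL2Tr (t : H) : GL2m (Trm t).
Proof. apply/GL2mP; exists (Trm (- t)); split; apply: m2P; qext5; ring. Qed.
Lemma GL2Inv : GL2m Invm.
Proof. apply/GL2mP; exists Invm; split; apply: m2P; qext5; ring. Qed.
Lemma GL2Aff (b G Hh : H) : b != 0 -> Hh != 0 -> GL2m (Affm b G Hh).
Proof.
move=> hb hh; apply/GL2mP; exists (M2 b^-1 (- (b^-1 * G * Hh^-1)) 0 Hh^-1); split; apply: m2P;
  rewrite /= ?mulr0 ?mul0r ?addr0 ?add0r ?mulrV ?mulVr ?qunitE //.
- by rewrite mulrN !mulrA mulrV ?qunitE // mul1r addNr.
- by rewrite mulNr mulrVK ?qunitE // addrN.
Qed.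

Definition M0 (y2 y2' b G Hh : H) :=
  M2 (Hh + y2' * G) (- (Hh * y2) + y2' * (b - G * y2)) G (b - G * y2).

Lemma M0_prod (y2 y2' b G Hh : H) :
  M0 y2 y2' b G Hh = mmul (Trm y2') (mmul Invm (mmul (Affm b G Hh) (mmul Invm (Trm (- y2))))).
Proof. apply: m2P; qext5; ring. Qed.

Lemma GL2M0 (y2 y2' b G Hh : H) : b != 0 -> Hh != 0 -> GL2m (M0 y2 y2' b G Hh).
Proof.
move=> hb hh; rewrite M0_prod; apply: GL2mM; first exact: GL2Tr.
apply: GL2mM; first exact: GL2Inv.
apply: GL2mM; first exact: GL2Aff.
apply: GL2mM; first exact: GL2Inv.
exact: GL2Tr.
Qed.

Lemma RfM0 (y2 y2' b G Hh y : H) : Rf (M0 y2 y2' b G Hh) y = G * (y - y2) + b.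
Proof. rewrite /Rf /=; qext5; ring. Qed.

Lemma M0_y2 (y2 y2' b G Hh : H) : b != 0 -> fltm (M0 y2 y2' b G Hh) (Some y2) = Some y2'.
Proof.
move=> hb; apply: flt_someI; rewrite RfM0 subrr mulr0 add0r //=.
qext5; ring.
Qed.

Lemma M0_yi (y2 y2' b g h y y' : H) : b != 0 -> h != 0 -> y - y2 != 0 -> y' - y2' != 0 ->
  g + b * (y - y2)^-1 * h = (y' - y2')^-1 ->
  fltm (M0 y2 y2' b (g * h^-1) h^-1) (Some y) = Some y'.
Proof.
move=> hb hh hu hw e.
have hR : Rf (M0 y2 y2' b (g * h^-1) h^-1) y = (y' - y2')^-1 * h^-1 * (y - y2).
  rewrite RfM0 -e !mulrDl; congr (_ + _).
  by rewrite mulrK ?qunitE // mulrVK ?qunitE.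
have hw' : (y' - y2')^-1 != 0 by rewrite invr_eq0.
apply: flt_someI; first by rewrite hR !nzM // invr_eq0.
have -> : ma (M0 y2 y2' b (g * h^-1) h^-1) * y + mb (M0 y2 y2' b (g * h^-1) h^-1)
   = h^-1 * (y - y2) + y2' * Rf (M0 y2 y2' b (g * h^-1) h^-1) y.
  rewrite RfM0 /=; qext5; ring.
rewrite -[y' in LHS](subrK y2') mulrDl hR; congr (_ + _).
by rewrite !mulrA mulrV ?qunitE // mul1r.
Qed.

End C.


Section D.
Variable R : realType.
Local Notation H := (quat R).

Ltac qext6 := intros; repeat match goal with x : H |- _ => destruct x | x : m2 R |- _ => destruct x end;
  apply: quatP; rewrite /=.

Lemma conjM (a b Z : H) : a != 0 -> b != 0 -> (a * b) * Z * (a * b)^-1 = a * (b * Z * b^-1) * a^-1.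
Proof. by move=> ha hb; rewrite qinvM // !mulrA. Qed.

Lemma conjK (a Z : H) : a != 0 -> a^-1 * (a * Z * a^-1) * a^-1^-1 = Z.
Proof. by move=> ha; rewrite invrK !mulrA mulVr ?qunitE // mul1r mulrVK ?qunitE. Qed.

Lemma comb1 (s r t X Z : H) : s != 0 -> r != 0 -> t != 0 ->
  s * X * s^-1 = r * (t * Z * t^-1) * r^-1 ->
  X = (s^-1 * r * t) * Z * (s^-1 * r * t)^-1.
Proof.
move=> hs hr ht e.
have hs' : s^-1 != 0 by rewrite invr_eq0.
rewrite conjM ?nzM // conjM // -e conjK //.
Qed.

Lemma comb2 (a s s2 X Z Y : H) : a != 0 -> s != 0 -> s2 != 0 ->
  X = a * Z * a^-1 -> Y = s * Z * s^-1 ->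
  s2 * X * s2^-1 = (s2 * a * s^-1) * Y * (s2 * a * s^-1)^-1.
Proof.
move=> ha hs hs2 -> ->.
have hs' : s^-1 != 0 by rewrite invr_eq0.
rewrite conjM ?nzM // conjM // conjK //.
Qed.

Lemma cr_inj (y1 y2 y3 w : H) (z : hext R) : y2 != y1 -> y2 != y3 -> y1 != y3 ->
  w != y3 -> z != Some y3 ->
  cr (Some y1) (Some y2) (Some y3) z = cr (Some y1) (Some y2) (Some y3) (Some w) -> z = Some w.
Proof.
move=> h21 h23 h13 hw3 hz3.
have u21 : (y2 - y1)^-1 \is a GRing.unit by rewrite qunitE invr_eq0 subr_eq0.
have u23 : (y2 - y3) \is a GRing.unit by rewrite qunitE subr_eq0.
have key (t : H) : t - y3 != 0 -> (t - y1) * (t - y3)^-1 = 1 + (y3 - y1) * (t - y3)^-1.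
  move=> ht; rewrite -[t - y1](subrK (t - y3)) mulrDl mulrV ?qunitE //.
  by rewrite addrC; congr (_ + _ * _); qext6; ring.
have hw : w - y3 != 0 by rewrite subr_eq0.
case: z hz3 => [z|] hz3; rewrite ?crE3 !crE4 -!mulrA => /(mulrI u21).
  rewrite !mulrA => /(mulIr u23); rewrite !key //; last by rewrite subr_eq0; apply: neqS.
  move/addrI/(mulrI _); rewrite qunitE subr_eq0 eq_sym => /(_ h13) /invr_inj /eqP.
  by rewrite (can_eq (subrK _)) => /eqP ->.
move=> E; have : 1 * (y2 - y3) = ((w - y1) * (w - y3)^-1) * (y2 - y3) by rewrite mul1r -mulrA; exact: E.
move=> /(mulIr u23) /esym /eqP; rewrite key // -subr_eq0 addrAC subrr add0r.
rewrite qmul_eq0 invr_eq0 (negbTE hw) orbF subr_eq0 eq_sym (negbTE h13) //.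
Qed.

End D.


Section E.
Variable R : realType.
Local Notation H := (quat R).

Lemma aux3 (W A C : H) : W - A + C = W - (A - C).
Proof. by rewrite opprB addrA addrAC. Qed.

Lemma M0ex (y1 y2 y3 y1' y2' y3' b : H) : y1 != y2 -> y3 != y2 -> y1 != y3 ->
  y1' != y2' -> y3' != y2' -> y1' != y3' -> b != 0 ->
  exists M, [/\ GL2m M, fltm M (Some y1) = Some y1', fltm M (Some y2) = Some y2',
     fltm M (Some y3) = Some y3' & Rf M y2 = b].
Proof.
move=> h12 h32 h13 h12' h32' h13' hb.
set v1 := (y1 - y2)^-1; set v3 := (y3 - y2)^-1.
set w1 := (y1' - y2')^-1; set w3 := (y3' - y2')^-1.
have hv : v1 - v3 != 0.
  rewrite subr_eq0 /v1 /v3; apply/negP => /eqP /invr_inj /eqP.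
  by rewrite (can_eq (subrK _)) (negbTE h13).
have hwd : w1 - w3 != 0.
  rewrite subr_eq0 /w1 /w3; apply/negP => /eqP /invr_inj /eqP.
  by rewrite (can_eq (subrK _)) (negbTE h13').
set h := (v1 - v3)^-1 * b^-1 * (w1 - w3).
have hh : h != 0 by rewrite !nzM ?invr_eq0.
set g := w1 - b * v1 * h.
exists (M0 y2 y2' b (g * h^-1) h^-1); split.
- by apply: GL2M0; rewrite ?invr_eq0.
- apply: M0_yi; rewrite ?subr_eq0 //.
  by rewrite /g subrK.
- exact: M0_y2.
- apply: M0_yi; rewrite ?subr_eq0 //.
  have E : b * v1 * h - b * v3 * h = w1 - w3.
    by rewrite -mulrBl -mulrBr /h !mulrA mulrK ?qunitE // mulrV ?qunitE // mul1r.
  by rewrite /g -/v3 -/w3 aux3 E opprB addrC subrK.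
- by rewrite RfM0 subrr mulr0 add0r.
Qed.

Lemma exists_p (f : 'I_5 -> hext R) : exists p : H, forall n, f n != Some p.
Proof.
pose re n := if f n is Some x then qr x else 0.
pose t := 1 + \sum_(n < 5) `|re n|.
exists (Quat t 0 0 0) => n; apply/negP => /eqP e.
have : re n = t by rewrite /re e.
have : `|re n| <= \sum_(i < 5) `|re i|.
  by rewrite (bigD1 n) //= lerDl sumr_ge0.
move=> h1 h2; have h3 := ler_norm (re n); rewrite /t in h2; clear e; lra.
Qed.

Lemma I5_ind (P : 'I_5 -> Prop) : P i5_0 -> P i5_1 -> P i5_2 -> P i5_3 -> P i5_4 -> forall n, P n.
Proof.
move=> h0 h1 h2 h3 h4 [[|[|[|[|[|m]]]]] hm].
- by have -> : Ordinal hm = i5_0 by apply: val_inj.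
- by have -> : Ordinal hm = i5_1 by apply: val_inj.
- by have -> : Ordinal hm = i5_2 by apply: val_inj.
- by have -> : Ordinal hm = i5_3 by apply: val_inj.
- by have -> : Ordinal hm = i5_4 by apply: val_inj.
- by [].
Qed.

End E.


Theorem mainTheorem3 (R : realType) (q q' : 'I_5 -> hext R)
  (Hq : injective q) (Hq' : injective q') :
  (exists a b c d : quat R, GL2 a b c d /\ forall n : 'I_5, flt a b c d (q n) = q' n)
  <->
  (exists a : quat R, a <> q0 R /\
     cr (q' i5_0) (q' i5_1) (q' i5_2) (q' i5_3)
       = qmul (qmul a (cr (q i5_0) (q i5_1) (q i5_2) (q i5_3))) (qinv a) /\
     cr (q' i5_0) (q' i5_1) (q' i5_2) (q' i5_4)
       = qmul (qmul a (cr (q i5_0) (q i5_1) (q i5_2) (q i5_4))) (qinv a)).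
Proof.
have dq (i j : 'I_5) : i != j -> q i != q j by move=> h; apply: contra h => /eqP /Hq ->.
have dq' (i j : 'I_5) : i != j -> q' i != q' j by move=> h; apply: contra h => /eqP /Hq' ->.
have [p hp] := exists_p q.
have [p' hp'] := exists_p q'.
pose yq n := yv p (q n).
pose yq' n := yv p' (q' n).
have hP n : fltm (Pm p) (q n) = Some (yq n) := fltP (hp n).
have hP' n : fltm (Pm p') (q' n) = Some (yq' n) := fltP (hp' n).
have hPi n : fltm (Pinv p) (Some (yq n)) = q n.
  by rewrite -hP fltm_comp ?PinvPm ?fltm1 //; exact: GL2Pm.
have hPi' n : fltm (Pinv p') (Some (yq' n)) = q' n.
  by rewrite -hP' fltm_comp ?PinvPm ?fltm1 //; exact: GL2Pm.
have dy (i j : 'I_5) : i != j -> yq i != yq j.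
  by move=> h; apply: contra h => /eqP /(yv_inj (hp i) (hp j)) /Hq ->.
have dy' (i j : 'I_5) : i != j -> yq' i != yq' j.
  by move=> h; apply: contra h => /eqP /(yv_inj (hp' i) (hp' j)) /Hq' ->.
have cB k : k != i5_0 -> k != i5_1 -> k != i5_2 ->
  cr (Some (yq i5_0)) (Some (yq i5_1)) (Some (yq i5_2)) (Some (yq k))
  = psi p (q i5_1) * cr (q i5_0) (q i5_1) (q i5_2) (q k) * (psi p (q i5_1))^-1.
  move=> k0 k1 k2; apply: crB; rewrite ?dq //; by rewrite eq_sym.
have cB' k : k != i5_0 -> k != i5_1 -> k != i5_2 ->
  cr (Some (yq' i5_0)) (Some (yq' i5_1)) (Some (yq' i5_2)) (Some (yq' k))
  = psi p' (q' i5_1) * cr (q' i5_0) (q' i5_1) (q' i5_2) (q' k) * (psi p' (q' i5_1))^-1.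
  move=> k0 k1 k2; apply: crB; rewrite ?dq' //; by rewrite eq_sym.
have ps : psi p (q i5_1) != 0 := psi_neq0 (hp _).
have ps' : psi p' (q' i5_1) != 0 := psi_neq0 (hp' _).
split.
- move=> [a [b [c [d [hG hT]]]]].
  pose T := M2 a b c d.
  have hG' : GL2m T := hG.
  have hT' n : fltm T (q n) = q' n := hT n.
  pose M := mmul (Pm p') (mmul T (Pinv p)).
  have hGM : GL2m (mmul T (Pinv p)) by apply: GL2mM => //; exact: GL2Pinv.
  have hM n : fltm M (Some (yq n)) = Some (yq' n).
    rewrite -fltm_comp // -fltm_comp; last exact: GL2Pinv.
    by rewrite hPi hT' hP'.
  have [r1 _] := flt_some (hM i5_1).
  have key k : k != i5_0 -> k != i5_1 -> k != i5_2 ->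
    cr (q' i5_0) (q' i5_1) (q' i5_2) (q' k) =
    ((psi p' (q' i5_1))^-1 * Rf M (yq i5_1) * psi p (q i5_1)) * cr (q i5_0) (q i5_1) (q i5_2) (q k)
    * ((psi p' (q' i5_1))^-1 * Rf M (yq i5_1) * psi p (q i5_1))^-1.
    move=> k0 k1 k2; apply: comb1 => //.
    rewrite -cB' // -cB //.
    apply: crA; rewrite ?hM //; by [rewrite dy | rewrite dy'].
  pose a0 := (psi p' (q' i5_1))^-1 * Rf M (yq i5_1) * psi p (q i5_1).
  exists a0. split; last split.
  + by apply/eqP; rewrite !nzM // invr_eq0.
  + exact: key.
  + exact: key.
- move=> [a [ha [e3 e4]]].
  have ha' : a != 0 by apply/eqP.
  pose b := psi p' (q' i5_1) * a * (psi p (q i5_1))^-1.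
  have hb : b != 0 by rewrite !nzM // invr_eq0.
  have keyc k : k != i5_0 -> k != i5_1 -> k != i5_2 ->
    cr (q' i5_0) (q' i5_1) (q' i5_2) (q' k) = a * cr (q i5_0) (q i5_1) (q i5_2) (q k) * a^-1 ->
    cr (Some (yq' i5_0)) (Some (yq' i5_1)) (Some (yq' i5_2)) (Some (yq' k))
    = b * cr (Some (yq i5_0)) (Some (yq i5_1)) (Some (yq i5_2)) (Some (yq k)) * b^-1.
    move=> k0 k1 k2 e; rewrite cB' //; apply: (comb2 (Z := cr (q i5_0) (q i5_1) (q i5_2) (q k))) => //; exact: (cB k k0 k1 k2).
  have [M [hGM hM0 hM1 hM2 hR]] := @M0ex R (yq i5_0) (yq i5_1) (yq i5_2) (yq' i5_0) (yq' i5_1) (yq' i5_2) b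
    (dy i5_0 i5_1 isT) (dy i5_2 i5_1 isT) (dy i5_0 i5_2 isT) (dy' i5_0 i5_1 isT) (dy' i5_2 i5_1 isT) (dy' i5_0 i5_2 isT) hb.
  have hMk k : k != i5_0 -> k != i5_1 -> k != i5_2 ->
    cr (q' i5_0) (q' i5_1) (q' i5_2) (q' k) = a * cr (q i5_0) (q i5_1) (q i5_2) (q k) * a^-1 ->
    fltm M (Some (yq k)) = Some (yq' k).
  { move=> k0 k1 k2 e; apply: (@cr_inj R (yq' i5_0) (yq' i5_1) (yq' i5_2) (yq' k)).
    + exact: (dy' i5_1 i5_0 isT).
    + exact: (dy' i5_1 i5_2 isT).
    + exact: (dy' i5_0 i5_2 isT).
    + exact: (dy' k i5_2 k2).
    + rewrite -hM2; apply/negP => /eqP /(fltm_inj hGM) [] /eqP; rewrite (negbTE (dy _ _ k2)).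
      by [].
    + rewrite (crA hM0 hM1 hM2 (erefl _)) ?hR ?keyc //.
      * exact: (dy i5_1 i5_0 isT).
      * exact: (dy k i5_2 k2).
      * exact: (dy' i5_1 i5_0 isT).
      * exact: (dy' i5_1 i5_2 isT). }
  pose T := mmul (Pinv p') (mmul M (Pm p)).
  have hGT : GL2m T by apply: GL2mM; [exact: GL2Pinv | apply: GL2mM => //; exact: GL2Pm].
  have hall n : fltm M (Some (yq n)) = Some (yq' n) -> fltm T (q n) = q' n.
    move=> e; rewrite -fltm_comp; last by apply: GL2mM => //; exact: GL2Pm.
    rewrite -fltm_comp; last exact: GL2Pm.
    by rewrite hP e hPi'.
  exists (ma T), (mb T), (mc T), (md T); split; first exact: hGT.
  apply: I5_ind; apply: hall => //.
  + exact: hMk.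
  + exact: hMk.
Qed.
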